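(* Let $\epsilon:B\to A$ be a local augmentation, with section $j:A\to B$ ($\epsilon j=\mathrm{id}_A$). Let $C$ be the subgroup of the group of units of $B$ generated by $$\{(1+ab)(1+ba)^{-1}\mid a,b\in B,\ \epsilon(ab)=\epsilon(ba)=0\}.$$ Then $C$ is a normal subgroup of $\epsilon^{-1}(1)$, and there is a canonical isomorphism $$K_1(B)\cong K_1(A)\oplus \frac{\epsilon^{-1}(1)}{C},$$ given on $K_1(A)$ by the map induced by $j$ and on $\epsilon^{-1}(1)/C$ by sending the class of a unit $u\in\epsilon^{-1}(1)$ to the class $[u]\in K_1(B)$ of the $1\times1$ invertible matrix $(u)$.
   Context: Rings are associative with $1$. A ring homomorphism $f:B\to A$ is local if every square matrix $\alpha$ with entries in $B$ such that $f(\alpha)$ is invertible is itself invertible. An augmentation is a pair of ring homomorphisms $\epsilon:B\to A$, $j:A\to B$ with $\epsilon j=\mathrm{id}_A$; a local augmentation is an augmentation for which $\epsilon$ is local. Note every element of $\epsilon^{-1}(1)$ is a unit of $B$. $K_1(R)$ denotes the abelianization of $\mathrm{GL}(R)=\varinjlim \mathrm{GL}_n(R)$. *)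

(* Defs.v *)
From mathcomp Require Import all_boot all_algebra.
Set Implicit Arguments. Unset Strict Implicit. Unset Printing Implicit Defensive.
Import GRing.Theory.
Local Open Scope ring_scope.

Section K1.
Variable R : pzRingType.

Definition invertible_mx (n : nat) (M : 'M[R]_n) : Prop :=
  exists N : 'M[R]_n, M *m N = 1%:M /\ N *m M = 1%:M.

(* Stabilisation GL_n -> GL_p (n <= p): M |-> diag(M, 1_{p-n}). *)
Definition stab (p n : nat) (M : 'M[R]_n) : 'M[R]_p :=
  \matrix_(i < p, k < p)
    match (insub (val i) : option 'I_n), (insub (val k) : option 'I_n) with
    | Some i', Some k' => M i' k'
    | _, _ => ((val i == val k)%N)%:R
    end.

Inductive commprod (p : nat) : 'M[R]_p -> Prop :=
| commprod1 : commprod 1%:M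
| commprodS : forall (X g gi h hi : 'M[R]_p),
    g *m gi = 1%:M -> gi *m g = 1%:M ->
    h *m hi = 1%:M -> hi *m h = 1%:M ->
    commprod X -> commprod (X *m (g *m h *m gi *m hi)).

(* Equality of classes in K_1(R) = GL(R)/[GL(R),GL(R)], GL(R) = colim GL_n(R):
   [M] = [N] iff after stabilising to a common size p,
   stab M * (stab N)^-1 lies in [GL_p(R), GL_p(R)]. *)
Definition K1eq (n m : nat) (M : 'M[R]_n) (N : 'M[R]_m) : Prop :=
  exists p : nat, [/\ (n <= p)%N, (m <= p)%N &
    exists X : 'M[R]_p, commprod X /\ stab p M = X *m stab p N].
End K1.

Section Aug.
Variables (A B : pzRingType) (eps : {rmorphism B -> A}).

Definition local_hom : Prop :=
  forall (n : nat) (M : 'M[B]_n), invertible_mx (map_mx eps M) -> invertible_mx M.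

(* The subgroup C of the units of B generated by the elements
   (1+ab)(1+ba)^{-1} with eps(ab) = eps(ba) = 0 (here w = (1+ba)^{-1}),
   as the set of finite words in generators and their inverses. *)
Inductive inC : B -> Prop :=
| inC1 : inC 1
| inCgen : forall x a b w : B,
    eps (a * b) = 0 -> eps (b * a) = 0 ->
    (1 + b * a) * w = 1 -> w * (1 + b * a) = 1 ->
    inC x -> inC (x * ((1 + a * b) * w))
| inCinv : forall x a b w y : B,
    eps (a * b) = 0 -> eps (b * a) = 0 ->
    (1 + b * a) * w = 1 -> w * (1 + b * a) = 1 ->
    ((1 + a * b) * w) * y = 1 -> y * ((1 + a * b) * w) = 1 ->
    inC x -> inC (x * y).

(* The map K_1(A) (+) eps^{-1}(1)/C -> K_1(B) on representatives:
   (x, u) |-> j_*[x] * [(u)], computed in GL_{n+1}(B). *)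
Definition Phi (j : {rmorphism A -> B}) (n : nat) (x : 'M[A]_n) (u : B)
  : 'M[B]_n.+1 :=
  stab n.+1 (map_mx j x) *m stab n.+1 (u%:M : 'M[B]_1).
End Aug.

(* Main.v *)
Require Import Defs.
From mathcomp Require Import all_boot all_algebra.
Set Implicit Arguments. Unset Strict Implicit. Unset Printing Implicit Defensive.
Import GRing.Theory.
Local Open Scope ring_scope.
Lemma scalar_mxD (R : pzRingType) n (a b : R) : (a + b)%:M = a%:M + b%:M :> 'M[R]_n.
Proof. by apply/matrixP=> i j; rewrite !mxE mulrnDl. Qed.

Lemma scal0 (R : pzRingType) n : (0 : R)%:M = 0 :> 'M[R]_n.
Proof. by apply/matrixP=> i j; rewrite !mxE mul0rn. Qed.

Section Stab.
Variable R : pzRingType.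

Lemma stab_block n k (M : 'M[R]_n) : stab (n + k) M = block_mx M 0 0 1%:M.
Proof.
apply/matrixP=> i j; rewrite -[i]splitK -[j]splitK.
case: (split i) => i'; case: (split j) => j' /=;
  rewrite ?block_mxEul ?block_mxEur ?block_mxEdl ?block_mxEdr !mxE /=.
- rewrite insubT ?ltn_ord //= => Hi'; rewrite insubT ?ltn_ord //= => Hj'.
  by congr (M _ _); apply: val_inj.
- rewrite insubT ?ltn_ord //= => Hi'; rewrite insubF ?ltnNge ?leq_addr //=.
  by case: eqP => // E; move: (ltn_ord i'); rewrite E ltnNge leq_addr.
- rewrite insubF ?ltnNge ?leq_addr //=.
  by case: eqP => // E; move: (ltn_ord j'); rewrite -E ltnNge leq_addr.
- rewrite insubF ?ltnNge ?leq_addr //= eqn_add2l.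
  by [].  
Qed.
End Stab.
Lemma leq_addE n p : (n <= p)%N -> exists k, p = (n + k)%N.
Proof. by move=> h; exists (p - n)%N; rewrite subnKC. Qed.

Section Stab2.
Variable R : pzRingType.

Lemma stab_mul n p (M N : 'M[R]_n) : (n <= p)%N -> stab p (M *m N) = stab p M *m stab p N.
Proof.
move=> /leq_addE [k ->]; rewrite !stab_block mulmx_block.
by rewrite !mulmx0 !mul0mx !addr0 !add0r mul1mx.
Qed.

Lemma stab_one n p : (n <= p)%N -> stab p (1%:M : 'M[R]_n) = 1%:M.
Proof. by move=> /leq_addE [k ->]; rewrite stab_block -scalar_mx_block. Qed.

Lemma stab_id n (M : 'M[R]_n) : stab n M = M.
Proof.
apply/matrixP=> i j; rewrite !mxE insubT ?ltn_ord //= => Hi.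
by rewrite insubT ?ltn_ord //= => Hj; congr (M _ _); apply: val_inj.
Qed.

Lemma map_stab (S : pzRingType) (f : {rmorphism R -> S}) p n (M : 'M[R]_n) :
  map_mx f (stab p M) = stab p (map_mx f M).
Proof.
apply/matrixP=> i j; rewrite !mxE.
case: (insub (val i) : option 'I_n) => [i'|]; case: (insub (val j) : option 'I_n) => [j'|]; by rewrite ?mxE ?rmorph_nat.
Qed.

Lemma stab_stab n q p (M : 'M[R]_n) : (n <= q)%N -> (q <= p)%N ->
  stab p (stab q M) = stab p M.
Proof.
move=> hnq hqp; apply/matrixP=> i j; rewrite !mxE.
have lt_q (x : nat) : (x < n)%N -> (x < q)%N by move=> h; apply: leq_trans h hnq.
case: insubP => [i1 Hi1 Ei1|Hi1].
  case: insubP => [j1 Hj1 Ej1|Hj1]; first by rewrite mxE Ei1 Ej1.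
  case: (insub (val i) : option 'I_n) => // i2.
  by rewrite insubF //; apply/negbTE; apply: contraNN Hj1; apply: lt_q.
by rewrite insubF //; apply/negbTE; apply: contraNN Hi1; apply: lt_q.
Qed.
End Stab2.
Section Stab3.
Variable R : pzRingType.

Lemma stabE p n (M : 'M[R]_n) (i j : 'I_p) (i' j' : 'I_n) :
  val i = val i' -> val j = val j' -> stab p M i j = M i' j'.
Proof.
move=> Ei Ej; rewrite mxE insubT ?Ei //= => h1; rewrite insubT ?Ej //= => h2.
by congr (M _ _); apply: val_inj.
Qed.

Lemma stabE0 p n (M : 'M[R]_n) (i j : 'I_p) :
  ~~ ((i < n) && (j < n))%N -> stab p M i j = (val i == val j)%:R.
Proof.
rewrite negb_and => h; rewrite mxE.
case/orP: h => h; first by rewrite insubF //; apply/negbTE.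
by case: (insub (val i) : option 'I_n) => // i'; rewrite insubF //; apply/negbTE.
Qed.

Lemma stab_diag n k p (A : 'M[R]_n) (S : 'M[R]_k) : (k <= p)%N ->
  stab (n + p) (block_mx A 0 0 S) = block_mx A 0 0 (stab p S).
Proof.
move=> hkp; apply/matrixP=> i j; rewrite -[i]splitK -[j]splitK.
case: (split i) => i'; case: (split j) => j' /=;
  rewrite ?block_mxEul ?block_mxEur ?block_mxEdl ?block_mxEdr.
- by rewrite (stabE _ (i' := lshift k i') (j' := lshift k j')) // block_mxEul.
- case: (ltnP j' k) => hj.
    by rewrite (stabE _ (i' := lshift k i') (j' := rshift n (Ordinal hj))) // block_mxEur !mxE.
  rewrite stabE0 /=; last by rewrite ltn_add2l [(j' < k)%N]ltnNge hj andbF.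
  by rewrite mxE; case: eqP => // E; move: (ltn_ord i'); rewrite E ltnNge leq_addr.
- case: (ltnP i' k) => hi.
    by rewrite (stabE _ (i' := rshift n (Ordinal hi)) (j' := lshift k j')) // block_mxEdl !mxE.
  rewrite stabE0 /=; last by rewrite ltn_add2l [(i' < k)%N]ltnNge hi.
  by rewrite mxE; case: eqP => // E; move: (ltn_ord j'); rewrite -E ltnNge leq_addr.
- case: (ltnP i' k) => hi; case: (ltnP j' k) => hj.
  + rewrite (stabE _ (i' := rshift n (Ordinal hi)) (j' := rshift n (Ordinal hj))) //.
    by rewrite block_mxEdr (stabE _ (i' := Ordinal hi) (j' := Ordinal hj)).
  all: rewrite !stabE0 /= ?eqn_add2l //.
  all: by rewrite ?ltn_add2l ?hi ?hj ?(ltnNge i' k) ?(ltnNge j' k) ?hi ?hj ?andbF ?andbT.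
Qed.
End Stab3.
Section CP.
Variable R : pzRingType.
Implicit Types (n m p : nat).

Definition inv2 n (M N : 'M[R]_n) := M *m N = 1%:M /\ N *m M = 1%:M.

Lemma inv2_sym n (M N : 'M[R]_n) : inv2 M N -> inv2 N M.
Proof. by case. Qed.

Lemma inv2_mul n (M N Mi Ni : 'M[R]_n) : inv2 M Mi -> inv2 N Ni -> inv2 (M *m N) (Ni *m Mi).
Proof.
move=> [h1 h2] [h3 h4]; split.
  by rewrite mulmxA -(mulmxA M) h3 mulmx1 h1.
by rewrite mulmxA -(mulmxA Ni) h2 mulmx1 h4.
Qed.

Lemma inv2_1 n : inv2 (1%:M : 'M[R]_n) 1%:M.
Proof. by split; rewrite mulmx1. Qed.

Lemma inv2_uniq n (M N N' : 'M[R]_n) : inv2 M N -> inv2 M N' -> N = N'.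
Proof.
move=> [h1 h2] [h3 h4].
by rewrite -[N]mulmx1 -h3 mulmxA h2 mul1mx.
Qed.

Lemma inv2_stab n p (M N : 'M[R]_n) : (n <= p)%N -> inv2 M N -> inv2 (stab p M) (stab p N).
Proof.
by move=> hp [h1 h2]; split; rewrite -stab_mul // ?h1 ?h2 stab_one.
Qed.

Lemma cp_mul p (X Y : 'M[R]_p) : commprod X -> commprod Y -> commprod (X *m Y).
Proof.
move=> hX hY; elim: hY => [|Y' g gi h hi h1 h2 h3 h4 _ IH]; first by rewrite mulmx1.
by rewrite mulmxA; apply: commprodS.
Qed.

Lemma cp_comm p (g gi h hi : 'M[R]_p) : inv2 g gi -> inv2 h hi ->
  commprod (g *m h *m gi *m hi).
Proof.
move=> [h1 h2] [h3 h4]; rewrite -[_ *m hi]mul1mx; apply: commprodS => //.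
exact: commprod1.
Qed.

Lemma cp_inv p (X : 'M[R]_p) : commprod X -> exists Xi, commprod Xi /\ inv2 X Xi.
Proof.
move=> hX; elim: hX => [|X' g gi h hi h1 h2 h3 h4 _ [Xi [cXi iX]]].
  by exists 1%:M; split; [exact: commprod1 | exact: inv2_1].
have ic : inv2 (g *m h *m gi *m hi) (h *m g *m hi *m gi).
  have := inv2_mul (inv2_mul (inv2_mul (conj h1 h2) (conj h3 h4)) (conj h2 h1)) (conj h4 h3).
  by rewrite !mulmxA.
exists ((h *m g *m hi *m gi) *m Xi); split.
  by apply: cp_mul => //; apply: cp_comm.
by apply: inv2_mul.
Qed.
End CP.

Lemma inv2_map (R S : pzRingType) (f : {rmorphism R -> S}) n (M N : 'M[R]_n) :
  @inv2 R n M N -> inv2 (map_mx f M) (map_mx f N).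
Proof.
by move=> [h1 h2]; split; rewrite -map_mxM ?h1 ?h2 map_scalar_mx rmorph1.
Qed.

Section CP2.
Variable R : pzRingType.

Lemma cp_conj p (X P Pi : 'M[R]_p) : commprod X -> inv2 P Pi -> commprod (P *m X *m Pi).
Proof.
move=> hX [hP1 hP2]; elim: hX => [|X' g gi h hi h1 h2 h3 h4 _ IH].
  by rewrite mulmx1 hP1; exact: commprod1.
have -> : P *m (X' *m (g *m h *m gi *m hi)) *m Pi =
   (P *m X' *m Pi) *m ((P *m g *m Pi) *m (P *m h *m Pi) *m (P *m gi *m Pi) *m (P *m hi *m Pi)).
  by rewrite !mulmxA -!(mulmxA _ Pi P) !hP2 !mulmx1 ?mulmxA.
apply: cp_mul => //; apply: cp_comm; split.
- by rewrite !mulmxA -(mulmxA _ Pi P) hP2 mulmx1 -(mulmxA _ g gi) h1 mulmx1.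
- by rewrite !mulmxA -(mulmxA _ Pi P) hP2 mulmx1 -(mulmxA _ gi g) h2 mulmx1.
- by rewrite !mulmxA -(mulmxA _ Pi P) hP2 mulmx1 -(mulmxA _ h hi) h3 mulmx1.
- by rewrite !mulmxA -(mulmxA _ Pi P) hP2 mulmx1 -(mulmxA _ hi h) h4 mulmx1.
Qed.

Lemma cp_stab n p (X : 'M[R]_n) : (n <= p)%N -> commprod X -> commprod (stab p X).
Proof.
move=> hp; elim=> [|X' g gi h hi h1 h2 h3 h4 _ IH].
  by rewrite stab_one //; exact: commprod1.
rewrite !stab_mul //; apply: cp_mul => //; apply: cp_comm; exact: inv2_stab.
Qed.

Lemma cp_diag1 n p (X : 'M[R]_p) : commprod X -> commprod (block_mx (1%:M : 'M[R]_n) 0 0 X).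
Proof.
elim=> [|X' g gi h hi h1 h2 h3 h4 _ IH].
  by rewrite -scalar_mx_block; exact: commprod1.
have E (Y Z : 'M[R]_p) : block_mx (1%:M : 'M[R]_n) 0 0 (Y *m Z) =
    block_mx 1%:M 0 0 Y *m block_mx 1%:M 0 0 Z.
  by rewrite mulmx_block !mulmx0 !mul0mx !addr0 !add0r mulmx1.
rewrite !E; apply: cp_mul => //; apply: cp_comm; split;
  by rewrite -E ?h1 ?h2 ?h3 ?h4 -scalar_mx_block.
Qed.
End CP2.

Lemma cp_map (R S : pzRingType) (f : {rmorphism R -> S}) p (X : 'M[R]_p) :
  commprod X -> commprod (map_mx f X).
Proof.
elim=> [|X' g gi h hi h1 h2 h3 h4 _ IH].
  by rewrite map_scalar_mx rmorph1; exact: commprod1.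
rewrite !map_mxM; apply: cp_mul => //; apply: cp_comm; exact: inv2_map.
Qed.

Section K1.
Variable R : pzRingType.

Definition EqP p (M N : 'M[R]_p) := exists X, commprod X /\ M = X *m N.

Lemma EqP_refl p (M : 'M[R]_p) : EqP M M.
Proof. by exists 1%:M; split; [exact: commprod1 | rewrite mul1mx]. Qed.

Lemma EqP_sym p (M N : 'M[R]_p) : EqP M N -> EqP N M.
Proof.
move=> [X [hX ->]]; have [Xi [hXi [i1 i2]]] := cp_inv hX.
by exists Xi; split => //; rewrite mulmxA i2 mul1mx.
Qed.

Lemma EqP_trans p (M N P : 'M[R]_p) : EqP M N -> EqP N P -> EqP M P.
Proof.
move=> [X [hX ->]] [Y [hY ->]]; exists (X *m Y); split; first exact: cp_mul.
by rewrite mulmxA.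
Qed.

Lemma EqP_mulr p (M N P : 'M[R]_p) : EqP M N -> EqP (M *m P) (N *m P).
Proof. by move=> [X [hX ->]]; exists X; split => //; rewrite mulmxA. Qed.

Lemma EqP_mull p (M N P Pi : 'M[R]_p) : inv2 P Pi -> EqP M N -> EqP (P *m M) (P *m N).
Proof.
move=> hP [X [hX ->]]; exists (P *m X *m Pi); split; first exact: cp_conj.
by case: hP => h1 h2; rewrite -!mulmxA (mulmxA Pi) h2 mul1mx.
Qed.

Lemma EqP_cp p (M X : 'M[R]_p) : commprod X -> EqP (X *m M) M.
Proof. by move=> hX; exists X. Qed.

Lemma EqP_stab n p (M N : 'M[R]_n) : (n <= p)%N -> EqP M N -> EqP (stab p M) (stab p N).
Proof.
move=> hp [X [hX ->]]; exists (stab p X); split; first exact: cp_stab.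
exact: stab_mul.
Qed.

Lemma K1eq_intro n m p (M : 'M[R]_n) (N : 'M[R]_m) :
  (n <= p)%N -> (m <= p)%N -> EqP (stab p M) (stab p N) -> K1eq M N.
Proof. by move=> h1 h2 h3; exists p; split. Qed.

Lemma K1eq_big n m q (M : 'M[R]_n) (N : 'M[R]_m) : K1eq M N ->
  exists p, [/\ (q <= p)%N, (n <= p)%N, (m <= p)%N & EqP (stab p M) (stab p N)].
Proof.
move=> [p0 [h1 h2 h3]]; exists (maxn p0 q); split; rewrite ?leq_maxr //.
- by apply: leq_trans h1 (leq_maxl _ _).
- by apply: leq_trans h2 (leq_maxl _ _).
rewrite -(stab_stab _ h1 (leq_maxl p0 q)) -(stab_stab _ h2 (leq_maxl p0 q)).
exact: EqP_stab (leq_maxl _ _) h3.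
Qed.

Lemma K1eq_refl n (M : 'M[R]_n) : K1eq M M.
Proof. by apply: (K1eq_intro (p := n)) => //; exact: EqP_refl. Qed.

Lemma K1eq_sym n m (M : 'M[R]_n) (N : 'M[R]_m) : K1eq M N -> K1eq N M.
Proof. by move=> [p [h1 h2 h3]]; exists p; split => //; apply: EqP_sym. Qed.

Lemma K1eq_trans n m k (M : 'M[R]_n) (N : 'M[R]_m) (P : 'M[R]_k) :
  K1eq M N -> K1eq N P -> K1eq M P.
Proof.
move=> hMN hNP; have [p [_ h1 h2 e1]] := K1eq_big 0 hMN.
have [q [hpq h3 h4 e2]] := K1eq_big p hNP.
apply: (K1eq_intro (p := q)) => //; first exact: leq_trans h1 hpq.
apply: EqP_trans e2; rewrite -(stab_stab _ h1 hpq) -(stab_stab _ h2 hpq).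
exact: EqP_stab.
Qed.

Lemma K1eq_stab n p (M : 'M[R]_n) : (n <= p)%N -> K1eq (stab p M) M.
Proof. by move=> hp; apply: (K1eq_intro (p := p)) => //; rewrite stab_id; apply: EqP_refl. Qed.

Lemma K1eq_EqP p (M N : 'M[R]_p) : EqP M N -> K1eq M N.
Proof. by move=> h; apply: (K1eq_intro (p := p)) => //; rewrite !stab_id. Qed.

Lemma K1eq_mul n m (M N : 'M[R]_n) (M' N' Mi' : 'M[R]_m) : inv2 M' Mi' ->
  K1eq M M' -> K1eq N N' -> K1eq (M *m N) (M' *m N').
Proof.
move=> hi hM hN; have [p [_ h1 h2 e1]] := K1eq_big 0 hM.
have [q [hpq h3 h4 e2]] := K1eq_big p hN.
apply: (K1eq_intro (p := q)) => //; rewrite !stab_mul //.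
have e1' : EqP (stab q M) (stab q M').
  by rewrite -(stab_stab _ h1 hpq) -(stab_stab _ h2 hpq); exact: EqP_stab.
apply: (@EqP_trans _ _ (stab q M' *m stab q N)); first exact: EqP_mulr.
exact: EqP_mull (inv2_stab h4 hi) e2.
Qed.
End K1.

Lemma K1eq_map (R S : pzRingType) (f : {rmorphism R -> S}) n m (M : 'M[R]_n) (N : 'M[R]_m) :
  K1eq M N -> K1eq (map_mx f M) (map_mx f N).
Proof.
move=> [p [h1 h2 [X [hX e]]]]; exists p; split => //; exists (map_mx f X); split.
  exact: cp_map.
by rewrite -!map_stab e map_mxM.
Qed.
From Stdlib Require Import ClassicalEpsilon.

Section Ring.
Variables (R : pzRingType).
Definition binv (u : R) : R := epsilon (inhabits 0) (fun v => u * v = 1 /\ v * u = 1).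
Lemma binvP (u : R) : (exists v, u * v = 1 /\ v * u = 1) -> u * binv u = 1 /\ binv u * u = 1.
Proof. move=> h; exact: (epsilon_spec (inhabits 0) _ h). Qed.

Lemma inv_uniq (u v w : R) : u * v = 1 -> w * u = 1 -> v = w.
Proof. by move=> h1 h2; rewrite -[v]mul1r -h2 -mulrA h1 mulr1. Qed.

Lemma inv1ab (a b w : R) : (1 + b * a) * w = 1 -> w * (1 + b * a) = 1 ->
  (1 + a * b) * (1 - a * w * b) = 1 /\ (1 - a * w * b) * (1 + a * b) = 1.
Proof.
move=> h1 h2; split.
  have k : a * w * b + a * b * (a * w * b) = a * b.
    transitivity (a * ((1 + b * a) * w) * b); last by rewrite h1 mulr1.
    by rewrite mulrDl mul1r mulrDr mulrDl !mulrA.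
  rewrite mulrDl mul1r mulrBr mulr1.
  have -> : a * b - a * b * (a * w * b) = a * w * b.
    by apply/eqP; rewrite subr_eq k.
  by rewrite subrK.
have k : a * w * b + a * w * b * (a * b) = a * b.
  transitivity (a * (w * (1 + b * a)) * b); last by rewrite h2 mulr1.
  by rewrite mulrDr mulr1 mulrDr mulrDl !mulrA.
rewrite mulrDr mulr1 mulrBl mul1r.
have -> : a * b - a * w * b * (a * b) = a * w * b.
  by apply/eqP; rewrite subr_eq k.
by rewrite subrK.
Qed.
End Ring.
Section CGroup.
Variables (A B : pzRingType) (eps : {rmorphism B -> A}).
Variable hloc : local_hom eps.

Definition e1 (u : B) := eps u = 1.
Lemma eps1 : eps 1 = 1. Proof. exact: (rmorph1 eps). Qed.

Lemma unit_e1 (u : B) : e1 u -> u * binv u = 1 /\ binv u * u = 1.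
Proof.
move=> hu; apply: binvP.
have [N [h1 h2]] : invertible_mx (u%:M : 'M[B]_1).
  apply: hloc; rewrite map_scalar_mx hu; exists 1%:M; by rewrite mulmx1.
exists (N 0 0); split.
  by move: (congr1 (fun M : 'M[B]_1 => M 0 0) h1); rewrite mul_scalar_mx !mxE eqxx.
move: (congr1 (fun M : 'M[B]_1 => M 0 0) h2); rewrite mxE big_ord1 mxE eqxx /=.
by rewrite mxE eqxx mulr1n.
Qed.

Lemma e1_binv (u : B) : e1 u -> e1 (binv u).
Proof.
move=> hu; have [h1 _] := unit_e1 hu.
by move: (congr1 eps h1); rewrite rmorphM hu mul1r eps1.
Qed.

Lemma e1M (u v : B) : e1 u -> e1 v -> e1 (u * v).
Proof. by rewrite /e1 rmorphM => -> ->; rewrite mulr1. Qed.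

Lemma e1_1 : e1 1. Proof. exact: eps1. Qed.

Lemma e1_inv (u v : B) : e1 u -> u * v = 1 -> e1 v.
Proof. by move=> hu h; move: (congr1 eps h); rewrite rmorphM hu mul1r eps1. Qed.

Lemma inC_mul x y : inC eps x -> inC eps y -> inC eps (x * y).
Proof.
move=> hx; elim=> [|y' a b w h1 h2 h3 h4 _ IH|y' a b w z h1 h2 h3 h4 h5 h6 _ IH].
- by rewrite mulr1.
- by rewrite mulrA; apply: inCgen.
- by rewrite mulrA; apply: (inCinv (a := a) (b := b) (w := w)).
Qed.

Lemma inC_gen a b w : eps (a * b) = 0 -> eps (b * a) = 0 ->
  (1 + b * a) * w = 1 -> w * (1 + b * a) = 1 -> inC eps ((1 + a * b) * w).
Proof. by move=> *; rewrite -[X in inC _ X]mul1r; apply: inCgen => //; exact: inC1. Qed.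

Lemma inC_inv_ex x : inC eps x -> exists xi, [/\ inC eps xi, x * xi = 1 & xi * x = 1].
Proof.
elim=> [|x0 a b w h1 h2 h3 h4 _ [xi [c1 c2 c3]]|x0 a b w y h1 h2 h3 h4 h5 h6 _ [xi [c1 c2 c3]]].
- by exists 1; split; rewrite ?mulr1 //; exact: inC1.
- have [i1 i2] := inv1ab h3 h4.
  set g := (1 + a * b) * w; set gi := (1 + b * a) * (1 - a * w * b).
  have g1 : g * gi = 1 by rewrite /g /gi mulrA -(mulrA _ w) h4 mulr1 i1.
  have g2 : gi * g = 1 by rewrite /g /gi mulrA -(mulrA _ _ (1 + a * b)) i2 mulr1 h3.
  exists (gi * xi); split.
  + apply: inC_mul c1; rewrite -[gi]mul1r.
    by apply: (inCinv (a := a) (b := b) (w := w)) => //; exact: inC1.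
  + by rewrite -mulrA (mulrA g) g1 mul1r c2.
  + by rewrite mulrA -(mulrA gi) c3 mulr1 g2.
- exists (((1 + a * b) * w) * xi); split.
  + by apply: inC_mul c1; apply: inC_gen.
  + by rewrite -mulrA (mulrA y) h6 mul1r c2.
  + by rewrite mulrA -(mulrA _ xi) c3 mulr1 h5.
Qed.

Lemma inC_e1 x : inC eps x -> e1 x.
Proof.
rewrite /e1; elim=> [|x0 a b w h1 h2 h3 h4 _ IH|x0 a b w y h1 h2 h3 h4 h5 h6 _ IH].
- exact: eps1.
- have ew : eps w = 1.
    by move: (congr1 eps h3); rewrite rmorphM rmorphD h2 eps1 addr0 mul1r.
  by rewrite !rmorphM rmorphD h1 eps1 addr0 IH ew !mul1r.
- have ew : eps w = 1.
    by move: (congr1 eps h3); rewrite rmorphM rmorphD h2 eps1 addr0 mul1r.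
  have ey : eps y = 1.
    by move: (congr1 eps h5); rewrite !rmorphM rmorphD h1 eps1 addr0 ew !mul1r.
  by rewrite rmorphM IH ey mulr1.
Qed.

Lemma comm_C u ui v vi : e1 u -> e1 v -> u * ui = 1 -> ui * u = 1 -> v * vi = 1 -> vi * v = 1 ->
  inC eps (v * ui * vi * u).
Proof.
move=> eu ev hu1 hu2 hv1 hv2.
have eui : e1 ui by apply: e1_inv eu hu1.
have -> : v * ui * vi * u = (1 + u * (ui * (v - 1))) * (ui * vi * u).
  by rewrite (mulrA u ui) hu1 mul1r addrC subrK !mulrA.
apply: inC_gen.
- by rewrite mulrA hu1 mul1r rmorphB ev eps1 subrr.
- by rewrite !rmorphM rmorphB ev eps1 subrr mulr0 mul0r.
- have -> : 1 + ui * (v - 1) * u = ui * v * u.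
    by rewrite mulrBr mulr1 mulrBl hu2 addrC subrK.
  by rewrite !mulrA -(mulrA _ u ui) hu1 mulr1 -(mulrA _ v vi) hv1 mulr1 hu2.
- have -> : 1 + ui * (v - 1) * u = ui * v * u.
    by rewrite mulrBr mulr1 mulrBl hu2 addrC subrK.
  by rewrite !mulrA -(mulrA _ u ui) hu1 mulr1 -(mulrA _ vi v) hv2 mulr1 hu2.
Qed.

Lemma inC_normal u ui c : e1 u -> u * ui = 1 -> ui * u = 1 -> inC eps c -> inC eps (u * c * ui).
Proof.
move=> eu h1 h2 hc; have [ci [hci c1 c2]] := inC_inv_ex hc.
have ec := inC_e1 hc.
have eci : e1 ci by apply: e1_inv ec c1.
have -> : u * c * ui = (u * c * ui * ci) * c by rewrite -(mulrA _ ci c) c2 mulr1.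
apply: inC_mul hc.
by apply: comm_C.
Qed.

Definition cong (u v : B) := exists c, inC eps c /\ v = u * c.

Lemma cong_refl u : cong u u.
Proof. by exists 1; split; [exact: inC1 | rewrite mulr1]. Qed.

Lemma cong_sym u v : cong u v -> cong v u.
Proof.
move=> [c [hc ->]]; have [ci [hci c1 c2]] := inC_inv_ex hc.
by exists ci; split => //; rewrite -mulrA c1 mulr1.
Qed.

Lemma cong_trans u v w : cong u v -> cong v w -> cong u w.
Proof.
move=> [c [hc ->]] [d [hd ->]]; exists (c * d); split; first exact: inC_mul.
by rewrite mulrA.
Qed.

Lemma cong_eq u v : u = v -> cong u v.
Proof. by move=> ->; exact: cong_refl. Qed.

Lemma cong_mull w u v : cong u v -> cong (w * u) (w * v).
Proof. by move=> [c [hc ->]]; exists c; split => //; rewrite mulrA. Qed.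

Lemma cong_mulr w u v : e1 w -> cong u v -> cong (u * w) (v * w).
Proof.
move=> ew [c [hc ->]]; have [i1 i2] := unit_e1 ew.
exists (binv w * c * w); split.
  by apply: inC_normal => //; apply: e1_binv.
by rewrite !mulrA -(mulrA u w) i1 mulr1.
Qed.

Lemma cong_mul u v u' v' : e1 u' -> cong u v -> cong u' v' -> cong (u * u') (v * v').
Proof.
move=> e h1 h2; apply: (cong_trans (v := v * u')); first exact: cong_mulr.
exact: cong_mull.
Qed.

Lemma cong_comm u v : e1 u -> e1 v -> cong (u * v) (v * u).
Proof.
move=> eu ev; have [u1 u2] := unit_e1 eu; have [v1 v2] := unit_e1 ev.
exists (binv v * binv u * v * u); split.
  apply: comm_C => //; exact: e1_binv.
by rewrite !mulrA -(mulrA u v) v1 mulr1 u1 mul1r.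
Qed.

Lemma cong_gen a b w : eps (a * b) = 0 -> eps (b * a) = 0 ->
  (1 + b * a) * w = 1 -> w * (1 + b * a) = 1 -> cong (1 + b * a) (1 + a * b).
Proof.
move=> h1 h2 h3 h4; exists (w * ((1 + a * b) * w) * (1 + b * a)); split.
  apply: inC_normal => //; last exact: inC_gen.
  by apply: (e1_inv (u := 1 + b * a)) => //; rewrite /e1 rmorphD h2 eps1 addr0.
by rewrite !mulrA h3 mul1r -mulrA h4 mulr1.
Qed.

Lemma cong_e1 u v : e1 u -> cong u v -> e1 v.
Proof. by move=> eu [c [hc ->]]; apply: e1M => //; apply: inC_e1. Qed.
End CGroup.
Section Delta.
Variables (A B : pzRingType) (eps : {rmorphism B -> A}).
Variable hloc : local_hom eps.

Fixpoint Delta (p : nat) : 'M[B]_p -> B :=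
  if p is p'.+1 then fun M : 'M_(1 + p') =>
     (ulsubmx M 0 0) * Delta (drsubmx M - dlsubmx M *m (binv (ulsubmx M 0 0))%:M *m ursubmx M)
  else fun _ => 1.

Lemma DeltaE p (a : B) (r : 'rV[B]_p) (c : 'cV[B]_p) (D : 'M[B]_p) :
  Delta (block_mx a%:M r c D : 'M_(1 + p)) = a * Delta (D - c *m (binv a)%:M *m r).
Proof.
have h : (a%:M : 'M[B]_1) 0 0 = a by rewrite mxE eqxx.
by rewrite /= block_mxKul block_mxKur block_mxKdl block_mxKdr h.
Qed.

Lemma block_split p (M : 'M[B]_(1 + p)) :
  M = block_mx (M 0 0)%:M (ursubmx M) (dlsubmx M) (drsubmx M).
Proof.
have {1}-> : M = block_mx (ulsubmx M) (ursubmx M) (dlsubmx M) (drsubmx M) by rewrite submxK.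
rewrite [ulsubmx M]mx11_scalar; congr (block_mx (_%:M) _ _ _).
by rewrite !mxE; congr (M _ _); apply: val_inj.
Qed.

Lemma Delta0 (M : 'M[B]_0) : Delta M = 1. Proof. by []. Qed.

Definition unip p (M : 'M[B]_p) := map_mx eps M = 1%:M.

Lemma unip_block p (a : B) (r : 'rV[B]_p) (c : 'cV[B]_p) (D : 'M[B]_p) :
  unip (block_mx a%:M r c D : 'M_(1 + p)) <->
  [/\ eps a = 1, map_mx eps r = 0, map_mx eps c = 0 & unip D].
Proof.
rewrite /unip map_block_mx map_scalar_mx (scalar_mx_block 1 p); split.
  case/eq_block_mx => h1 h2 h3 h4; split => //.
  by move: (congr1 (fun M : 'M[A]_1 => M 0 0) h1); rewrite !mxE eqxx !mulr1n.
by case=> -> -> -> ->.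
Qed.

Lemma unip_mul p (M N : 'M[B]_p) : unip M -> unip N -> unip (M *m N).
Proof. by rewrite /unip map_mxM => -> ->; rewrite mulmx1. Qed.

Lemma unip1 p : unip (1%:M : 'M[B]_p).
Proof. by rewrite /unip map_scalar_mx rmorph1. Qed.

Lemma unip00 p (M : 'M[B]_(1 + p)) : unip M -> eps (M 0 0) = 1.
Proof. by rewrite [M]block_split => /unip_block []; rewrite -block_split. Qed.

Lemma Delta_e1 p (M : 'M[B]_p) : unip M -> e1 eps (Delta M).
Proof.
elim: p M => [|p IH] M; first by rewrite /e1 Delta0 rmorph1.
rewrite [M]block_split DeltaE => /unip_block [h1 h2 h3 h4].
apply: e1M => //; apply: IH.
rewrite /unip map_mxB !map_mxM h3 !mul0mx subr0 //.
Qed.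
End Delta.
Section Core.
Variables (A B : pzRingType) (eps : {rmorphism B -> A}).
Variable hloc : local_hom eps.

Local Notation cong := (cong eps).
Local Notation e1 := (e1 eps).
Local Notation unip := (unip eps).

Lemma scal11 (a : B) : (a%:M : 'M[B]_1) 0 0 = a.
Proof. by rewrite mxE eqxx. Qed.

Lemma unip_schur p (a : B) (r : 'rV[B]_p) (c : 'cV[B]_p) (D : 'M[B]_p) (w : B) :
  unip (block_mx a%:M r c D : 'M_(1 + p)) -> unip (D - c *m w%:M *m r).
Proof.
case/unip_block => h1 h2 h3 h4.
by rewrite /unip map_mxB !map_mxM h3 !mul0mx subr0.
Qed.

Lemma Delta_L p (z : 'cV[B]_p) (P : 'M[B]_(1 + p)) : e1 (P 0 0) ->
  Delta (block_mx 1%:M 0 z 1%:M *m P) = Delta P.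
Proof.
move=> ea; rewrite [P]block_split; move: ea; move: (P 0 0) (ursubmx P) (dlsubmx P) (drsubmx P) => a r c D.
move=> ea; have [i1 i2] := unit_e1 hloc ea.
rewrite mulmx_block !mul1mx !mul0mx ?addr0 ?add0r !DeltaE; congr (_ * Delta _).
rewrite !mulmxDl -(mulmxA z) -scalar_mxM i1 mulmx1 opprD addrACA subrr add0r.
by rewrite addrC.
Qed.
End Core.
Section Core2.
Variables (A B : pzRingType) (eps : {rmorphism B -> A}).
Variable hloc : local_hom eps.

Local Notation cong := (cong eps).
Local Notation e1 := (e1 eps).
Local Notation unip := (unip eps).

Definition MulP p := forall T S : 'M[B]_p, unip T -> unip S ->
  cong (Delta (T *m S)) (Delta T * Delta S).
Definition SylP p := forall (x : 'cV[B]_p) (y : 'rV[B]_p),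
  map_mx eps x = 0 \/ map_mx eps y = 0 ->
  cong (Delta (1%:M + x *m y)) (1 + (y *m x) 0 0).

Lemma binvM (u a : B) : e1 u -> e1 a -> binv (u * a) * u = binv a.
Proof.
move=> eu ea; have eua : e1 (u * a) by apply: e1M.
have [i1 i2] := unit_e1 hloc eua; have [j1 j2] := unit_e1 hloc ea.
by apply/esym/(inv_uniq j1); rewrite -mulrA.
Qed.

Lemma Delta_Dg p (u : B) (V : 'M[B]_p) (P : 'M[B]_(1 + p)) : MulP p -> e1 u -> unip V -> unip P ->
  cong (Delta (block_mx u%:M 0 0 V *m P)) (u * Delta V * Delta P).
Proof.
move=> hM eu uV; rewrite [P]block_split; move: (P 0 0) (ursubmx P) (dlsubmx P) (drsubmx P) => a r c D.
move=> uP; have uS := unip_schur (binv a) uP; case/unip_block: uP => ea _ _ _.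
rewrite mulmx_block !mul0mx ?addr0 ?add0r -scalar_mxM !DeltaE.
have -> : V *m D - V *m c *m (binv (u * a))%:M *m (u%:M *m r) =
          V *m (D - c *m (binv a)%:M *m r).
  by rewrite mulmxBr !mulmxA -(mulmxA _ _ u%:M) -scalar_mxM binvM.
apply: (cong_trans (cong_mull _ (hM _ _ uV uS))).
rewrite -!mulrA; apply: cong_mull; rewrite !mulrA; apply: (cong_mulr hloc).
  exact: Delta_e1.
by apply: (cong_comm hloc) => //; apply: Delta_e1.
Qed.
End Core2.
Section Core3.
Variables (A B : pzRingType) (eps : {rmorphism B -> A}).
Variable hloc : local_hom eps.

Local Notation cong := (cong eps).
Local Notation e1 := (e1 eps).
Local Notation unip := (unip eps).

Lemma eps_entry m n (M : 'M[B]_(m, n)) i j : eps (M i j) = map_mx eps M i j.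
Proof. by rewrite mxE. Qed.

Lemma zmodAC2 (V : zmodType) (D X Y Z : V) : D - X + (- Z + (X - Y)) = D - Y - Z.
Proof. by rewrite addrCA (addrA (D - X)) subrK addrC. Qed.

Lemma Delta_U p (y : 'rV[B]_p) (P : 'M[B]_(1 + p)) : MulP eps p -> SylP eps p ->
  map_mx eps y = 0 -> unip P ->
  cong (Delta (block_mx 1%:M y 0 1%:M *m P)) (Delta P).
Proof.
move=> hM hS ey; rewrite [P]block_split.
move: (P 0 0) (ursubmx P) (dlsubmx P) (drsubmx P) => a r c D uP.
have uS := unip_schur (binv a) uP; case/unip_block: (uP) => ea er ec uD.
rewrite mulmx_block !mul1mx !mul0mx ?addr0 ?add0r.
set t := (y *m c) 0 0.
have yc : y *m c = t%:M by rewrite [y *m c]mx11_scalar.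
have et : eps t = 0 by rewrite /t eps_entry map_mxM ey mul0mx mxE.
rewrite yc -raddfD.
set a' := a + t.
have ea' : e1 a' by rewrite /e1 rmorphD ea et addr0.
have [i1 i2] := unit_e1 hloc ea'; have [j1 j2] := unit_e1 hloc ea.
rewrite !DeltaE.
set S := D - c *m (binv a)%:M *m r.
set T := 1%:M + (- (c *m (binv a')%:M)) *m y.
have sc : binv a - binv a' * t * binv a = binv a'.
  rewrite -[X in _ = X]mulr1 -j1.
  have -> : a * binv a = (a' - t) * binv a by rewrite /a' addrK.
  by rewrite mulrA mulrBr i2 mulrBl mul1r.
have E : D - c *m (binv a')%:M *m (r + y *m D) = T *m S.
  rewrite /T /S mulmxDl mul1mx mulNmx mulmxBr !mulNmx opprK.
  have h1 : c *m (binv a')%:M *m y *m (c *m (binv a)%:M *m r) =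
            c *m (binv a' * t * binv a)%:M *m r.
    by rewrite -!mulmxA (mulmxA y c) yc !scalar_mxM !mulmxA.
  have sc' : binv a' * t * binv a = binv a - binv a'.
    by rewrite -{2}sc opprB addrC subrK.
  rewrite h1 sc' raddfB /= mulmxBr mulmxBl mulmxDr opprD addrA.
  by rewrite zmodAC2 mulmxA.
rewrite E.
have uT : unip T.
  by rewrite /unip /T map_mxD map_mxM map_mxN map_mxM ec mul0mx oppr0 mul0mx addr0 map_scalar_mx rmorph1.
have hT := hS (- (c *m (binv a')%:M)) y.
have /hT {}hT : map_mx eps (- (c *m (binv a')%:M)) = 0 \/ map_mx eps y = 0.
  by left; rewrite map_mxN map_mxM ec mul0mx oppr0.
have yx : (y *m - (c *m (binv a')%:M)) 0 0 = - (t * binv a').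
  by rewrite mulmxN mulmxA yc -scalar_mxM mxE scal11.
apply: (cong_trans (cong_mull _ (hM _ _ uT uS))).
apply: (cong_trans (cong_mull _ ((cong_mulr hloc) _ _ _ (Delta_e1 uS) hT))).
have key : 1 + - (t * binv a') = a * binv a'.
  have -> : a = a' - t by rewrite /a' addrK.
  by rewrite mulrBl i1.
rewrite yx key mulrA.
apply: (cong_mulr hloc) (Delta_e1 uS) _.
have eaa : e1 (a * binv a') by apply: e1M => //; apply: e1_binv.
apply: (cong_trans ((cong_comm hloc) _ _ ea' eaa)).
by rewrite -mulrA i2 mulr1; apply: cong_refl.
Qed.

End Core3.
Section Core4.
Variables (A B : pzRingType) (eps : {rmorphism B -> A}).
Variable hloc : local_hom eps.

Local Notation cong := (cong eps).
Local Notation e1 := (e1 eps).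
Local Notation unip := (unip eps).

Lemma MulS p : MulP eps p -> SylP eps p -> MulP eps p.+1.
Proof.
move=> hM hS; change (MulP eps (1 + p)) => T S' uT uS'.
move: uT; rewrite [T]block_split; move: (T 0 0) (ursubmx T) (dlsubmx T) (drsubmx T) => a r c D uT.
have uS := unip_schur (binv a) uT; case/unip_block: (uT) => ea er ec uD.
set ai := binv a; set S := D - c *m ai%:M *m r.
have [j1 j2] := unit_e1 hloc ea.
have ar : a%:M *m (ai%:M *m r) = r by rewrite mulmxA -scalar_mxM j1 mul1mx.
have fact : block_mx a%:M r c D = block_mx 1%:M 0 (c *m ai%:M) 1%:M *m
    (block_mx a%:M 0 0 S *m block_mx 1%:M (ai%:M *m r) 0 1%:M).
  rewrite !mulmx_block !mul1mx !mul0mx !mulmx0 !mulmx1 ?addr0 ?add0r ar.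
  by rewrite -mulmxA -scalar_mxM j2 mulmx1 /S addrC subrK.
have uU : unip (block_mx 1%:M (ai%:M *m r) 0 1%:M : 'M_(1 + p)).
  apply/unip_block; split; rewrite ?rmorph1 ?map_mx0 //; last exact: unip1.
  by rewrite map_mxM er mulmx0.
have uDg : unip (block_mx a%:M 0 0 S : 'M_(1 + p)).
  by apply/unip_block; split; rewrite ?map_mx0.
have uUS := unip_mul uU uS'.
rewrite {1}fact -!mulmxA (Delta_L hloc); last first.
  by apply: unip00; apply: unip_mul.
rewrite DeltaE -/ai -/S.
apply: (cong_trans (Delta_Dg hloc hM ea uS uUS)).
apply: cong_mull; apply: Delta_U => //.
by rewrite map_mxM er mulmx0.
Qed.
End Core4.
Section Core5.
Variables (A B : pzRingType) (eps : {rmorphism B -> A}).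
Variable hloc : local_hom eps.

Local Notation cong := (cong eps).
Local Notation e1 := (e1 eps).
Local Notation unip := (unip eps).

Lemma SylS p : SylP eps p -> SylP eps p.+1.
Proof.
move=> hS; change (SylP eps (1 + p)) => x y h.
move: h; rewrite -[x]vsubmxK -[y]hsubmxK.
move: (usubmx x) (dsubmx x) (lsubmx y) (rsubmx y) => x1 x' y1 y'.
rewrite [x1]mx11_scalar [y1]mx11_scalar; move: (x1 0 0) (y1 0 0) => s q h.
have h' : (eps s = 0 /\ map_mx eps x' = 0) \/ (eps q = 0 /\ map_mx eps y' = 0).
  case: h => h; [left | right].
    move: h; rewrite map_col_mx map_scalar_mx -col_mx0 => /eq_col_mx [h1 h2]; split => //.
    by move: (congr1 (fun M : 'M[A]_1 => M 0 0) h1); rewrite !mxE eqxx.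
  move: h; rewrite map_row_mx map_scalar_mx -row_mx0 => /eq_row_mx [h1 h2]; split => //.
  by move: (congr1 (fun M : 'M[A]_1 => M 0 0) h1); rewrite !mxE eqxx.
have esq : eps (s * q) = 0 by rewrite rmorphM; case: h' => [[-> _]|[-> _]]; rewrite ?mul0r ?mulr0.
have eqs : eps (q * s) = 0 by rewrite rmorphM; case: h' => [[-> _]|[-> _]]; rewrite ?mul0r ?mulr0.
have ev : eps ((y' *m x') 0 0) = 0.
  by rewrite eps_entry map_mxM; case: h' => [[_ ->]|[_ ->]]; rewrite ?mulmx0 ?mul0mx mxE.
set v := (y' *m x') 0 0.
have ea : e1 (1 + s * q) by rewrite /e1 rmorphD esq (rmorph1 eps) addr0.
have [i1 i2] := unit_e1 hloc ea.
set ai := binv (1 + s * q).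
set be := 1 - q * ai * s.
have [k1 k2] := inv1ab i1 i2.
rewrite mul_col_row mul_row_col (scalar_mx_block 1 p) add_block_mx -scalar_mxM -scalar_mxD.
rewrite ?addr0 ?add0r DeltaE -/ai.
have -> : 1%:M + x' *m y' - x' *m q%:M *m ai%:M *m (s%:M *m y') = 1%:M + (x' *m be%:M) *m y'.
  rewrite -addrA; congr (_ + _).
  by rewrite /be raddfB /= mulmxBr mulmx1 mulmxBl -!mulmxA !scalar_mxM !mulmxA.
have hx : map_mx eps (x' *m be%:M) = 0 \/ map_mx eps y' = 0.
  case: h' => [[_ hx]|[_ hy]]; [left | by right].
  by rewrite map_mxM hx mul0mx.
apply: (cong_trans (cong_mull _ (hS _ _ hx))).
have -> : (y' *m (x' *m be%:M)) 0 0 = v * be.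
  by rewrite mulmxA [y' *m x']mx11_scalar -scalar_mxM scal11.
have e2 : e1 (1 + v * be).
  rewrite /e1 rmorphD rmorphM ev mul0r addr0; exact: (rmorph1 eps).
apply: (cong_trans ((cong_mulr hloc) _ _ _ e2 (cong_gen eqs esq i1 i2))).
have e3 : e1 (1 + q * s) by rewrite /e1 rmorphD eqs (rmorph1 eps) addr0.
apply: (cong_trans ((cong_comm hloc) _ _ e3 e2)).
apply: cong_eq.
rewrite -scalar_mxM [X in _ = 1 + X]mxE scal11 -/v.
by rewrite mulrDl mul1r -mulrA k2 mulr1 addrA.
Qed.

Lemma Core_all p : MulP eps p /\ SylP eps p.
Proof.
elim: p => [|p [hM hS]].
  split.
    by move=> T S _ _; rewrite !Delta0 mulr1; apply: cong_refl.
  move=> x y _; rewrite !Delta0 mxE big_ord0 addr0; exact: cong_refl.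
by split; [apply: MulS | apply: SylS].
Qed.
End Core5.
Section Conj.
Variables (A B : pzRingType) (eps : {rmorphism B -> A}).
Variable hloc : local_hom eps.

Local Notation cong := (cong eps).
Local Notation e1 := (e1 eps).
Local Notation unip := (unip eps).

Definition rcond p (x : 'cV[B]_p) (y : 'rV[B]_p) := map_mx eps x = 0 \/ map_mx eps y = 0.

Inductive RP p : 'M[B]_p -> Prop :=
| RP1 : RP 1%:M
| RPS : forall (x : 'cV[B]_p) (y : 'rV[B]_p) (Q : 'M[B]_p),
    rcond x y -> RP Q -> RP ((1%:M + x *m y) *m Q).

Lemma unip_rank1 p (x : 'cV[B]_p) (y : 'rV[B]_p) : rcond x y -> unip (1%:M + x *m y).
Proof.
rewrite /unip map_mxD map_mxM map_scalar_mx (rmorph1 eps).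
by case=> ->; rewrite ?mul0mx ?mulmx0 addr0.
Qed.

Lemma RP_unip p (Q : 'M[B]_p) : RP Q -> unip Q.
Proof.
elim=> [|x y Q' c _ IH]; first exact: unip1.
by apply: unip_mul => //; apply: unip_rank1.
Qed.

Lemma RP_mul p (Q1 Q2 : 'M[B]_p) : RP Q1 -> RP Q2 -> RP (Q1 *m Q2).
Proof.
move=> h1 h2; elim: h1 => [|x y Q c _ IH]; first by rewrite mul1mx.
by rewrite -mulmxA; apply: RPS.
Qed.

Lemma RP_rank1 p (x : 'cV[B]_p) (y : 'rV[B]_p) : rcond x y -> RP (1%:M + x *m y).
Proof. by move=> c; rewrite -[X in RP X]mulmx1; apply: RPS => //; exact: RP1. Qed.

Lemma RP_diag1 p (Q : 'M[B]_p) : RP Q -> RP (block_mx 1%:M 0 0 Q : 'M_(1 + p)).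
Proof.
elim=> [|x y Q' c _ IH]; first by rewrite -scalar_mx_block; exact: RP1.
have -> : block_mx 1%:M 0 0 ((1%:M + x *m y) *m Q') =
   (1%:M + col_mx 0 x *m row_mx 0 y) *m (block_mx 1%:M 0 0 Q' : 'M_(1 + p)).
  rewrite mul_col_row !mulmx0 !mul0mx (scalar_mx_block 1 p) add_block_mx !addr0.
  by rewrite mulmx_block !mul0mx !mulmx0 !addr0 !add0r mulmx1.
apply: RPS => //; case: c => h; [left | right].
  by rewrite map_col_mx h map_mx0 col_mx0.
by rewrite map_row_mx h map_mx0 row_mx0.
Qed.

Lemma unip_RP p (P : 'M[B]_p) : unip P -> RP P.
Proof.
elim: p P => [|p IH] P.
  by move=> _; rewrite (flatmx0 P) -(flatmx0 1%:M); exact: RP1.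
change 'M[B]_(1 + p) in P; change (unip (P : 'M_(1 + p)) -> @RP (1 + p) P).
rewrite [P]block_split; move: (P 0 0) (ursubmx P) (dlsubmx P) (drsubmx P) => a r c D uT.
have uS := unip_schur (binv a) uT; case/unip_block: (uT) => ea er ec uD.
set ai := binv a; set S := D - c *m ai%:M *m r.
have [j1 j2] := unit_e1 hloc ea.
have ar : a%:M *m (ai%:M *m r) = r by rewrite mulmxA -scalar_mxM j1 mul1mx.
have fact : block_mx a%:M r c D = block_mx 1%:M 0 (c *m ai%:M) 1%:M *m
    ((block_mx a%:M 0 0 1%:M *m block_mx 1%:M 0 0 S) *m block_mx 1%:M (ai%:M *m r) 0 1%:M).
  rewrite !mulmx_block !mul1mx !mul0mx !mulmx0 !mulmx1 ?addr0 ?add0r ar.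
  by rewrite -mulmxA -scalar_mxM j2 mulmx1 mul0mx add0r /S addrC subrK.
rewrite fact; apply: RP_mul; last apply: RP_mul; first last.
- have -> : block_mx 1%:M (ai%:M *m r) 0 1%:M =
      1%:M + col_mx (1%:M : 'M[B]_1) 0 *m row_mx 0 (ai%:M *m r) :> 'M_(1 + p).
    rewrite mul_col_row !mul1mx !mul0mx (scalar_mx_block 1 p) add_block_mx.
    by rewrite !addr0 !add0r.
  apply: RP_rank1; right; by rewrite map_row_mx map_mxM er mulmx0 map_mx0 row_mx0.
- apply: RP_mul; last by apply: RP_diag1; apply: IH.
  have -> : block_mx a%:M 0 0 1%:M =
      1%:M + col_mx (a - 1)%:M 0 *m row_mx (1%:M : 'M[B]_1) 0 :> 'M_(1 + p).
    rewrite mul_col_row !mulmx1 !mul0mx !mulmx0 (scalar_mx_block 1 p) add_block_mx.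
    by rewrite !addr0 -scalar_mxD addrC subrK.
  apply: RP_rank1; left.
  by rewrite map_col_mx map_scalar_mx rmorphB ea (rmorph1 eps) subrr scal0 map_mx0 col_mx0.
- have -> : block_mx 1%:M 0 (c *m ai%:M) 1%:M =
      1%:M + col_mx 0 (c *m ai%:M) *m row_mx (1%:M : 'M[B]_1) 0 :> 'M_(1 + p).
    rewrite mul_col_row !mulmx1 !mul0mx !mulmx0 (scalar_mx_block 1 p) add_block_mx.
    by rewrite !addr0 add0r.
  apply: RP_rank1; left.
  by rewrite map_col_mx map_mxM ec mul0mx map_mx0 col_mx0.
Qed.
End Conj.
Section DmSec.
Variables (A B : pzRingType) (eps : {rmorphism B -> A}) (j : {rmorphism A -> B}).
Variable hsec : forall a : A, eps (j a) = a.
Variable hloc : local_hom eps.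

Local Notation cong := (cong eps).
Local Notation e1 := (e1 eps).
Local Notation unip := (unip eps).

Lemma Mul_all p (T S : 'M[B]_p) : unip T -> unip S -> cong (Delta (T *m S)) (Delta T * Delta S).
Proof. by have [h _] := Core_all hloc p; apply: h. Qed.

Lemma Syl_all p (x : 'cV[B]_p) (y : 'rV[B]_p) : rcond eps x y ->
  cong (Delta (1%:M + x *m y)) (1 + (y *m x) 0 0).
Proof. by have [_ h] := Core_all hloc p; apply: h. Qed.

Lemma unip_conj p (h hi P : 'M[B]_p) : inv2 h hi -> unip P -> unip (h *m P *m hi).
Proof.
move=> [h1 h2] uP; rewrite /unip !map_mxM uP mulmx1 -map_mxM h1.
by rewrite map_scalar_mx (rmorph1 eps).
Qed.

Lemma Delta_conj p (h hi P : 'M[B]_p) : inv2 h hi -> unip P ->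
  cong (Delta (h *m P *m hi)) (Delta P).
Proof.
move=> hh uP; have rP := unip_RP hloc uP; elim: rP => [|x y Q c rQ IH].
  by case: hh => h1 _; rewrite mulmx1 h1; apply: cong_refl.
have uQ := RP_unip rQ.
have uF := unip_rank1 c.
have -> : h *m ((1%:M + x *m y) *m Q) *m hi =
    (h *m (1%:M + x *m y) *m hi) *m (h *m Q *m hi).
  by case: hh => h1 h2; rewrite !mulmxA -(mulmxA _ hi h) h2 mulmx1.
apply: (cong_trans (Mul_all (unip_conj hh uF) (unip_conj hh uQ))).
apply: cong_trans (cong_sym (Mul_all uF uQ)).
apply: (cong_trans (cong_mull _ IH)).
apply: (cong_mulr hloc); first exact: Delta_e1.
have -> : h *m (1%:M + x *m y) *m hi = 1%:M + (h *m x) *m (y *m hi).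
  by case: hh => h1 h2; rewrite mulmxDr mulmxDl mulmx1 h1 !mulmxA.
have c' : rcond eps (h *m x) (y *m hi).
  by case: c => hc; [left; rewrite map_mxM hc mulmx0 | right; rewrite map_mxM hc mul0mx].
apply: (cong_trans (Syl_all c')); apply: cong_sym; apply: (cong_trans (Syl_all c)).
apply: cong_eq; congr (1 + _).
by case: hh => h1 h2; rewrite !mulmxA -(mulmxA y hi h) h2 mulmx1.
Qed.

Definition minv p (M : 'M[B]_p) : 'M[B]_p := epsilon (inhabits 0) (fun N => inv2 M N).
Lemma minvP p (M N : 'M[B]_p) : inv2 M N -> minv M = N.
Proof.
move=> h; have h' : inv2 M (minv M) by apply: (epsilon_spec (inhabits 0) (fun N => inv2 M N)); exists N.
exact: inv2_uniq h' h.
Qed.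

Definition Gm p (M : 'M[B]_p) := map_mx j (map_mx eps M).
Definition Dm p (M : 'M[B]_p) : B := Delta (minv (Gm M) *m M).

Lemma eps_Gm p (M : 'M[B]_p) : map_mx eps (Gm M) = map_mx eps M.
Proof. by apply/matrixP=> i k; rewrite !mxE hsec. Qed.

Lemma Gm_inv p (M Mi : 'M[B]_p) : inv2 M Mi -> inv2 (Gm M) (Gm Mi).
Proof. by move=> h; apply: inv2_map; apply: inv2_map. Qed.

Lemma Gm_mul p (M N : 'M[B]_p) : Gm (M *m N) = Gm M *m Gm N.
Proof. by rewrite /Gm !map_mxM. Qed.

Lemma Dm_unip p (M Mi : 'M[B]_p) : inv2 M Mi -> unip (minv (Gm M) *m M).
Proof.
move=> h; rewrite (minvP (Gm_inv h)) /unip map_mxM eps_Gm -map_mxM.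
by case: h => _ ->; rewrite map_scalar_mx (rmorph1 eps).
Qed.

Lemma Dm_e1 p (M Mi : 'M[B]_p) : inv2 M Mi -> e1 (Dm M).
Proof. by move=> h; apply: Delta_e1; apply: Dm_unip h. Qed.

Lemma Dm_mul p (M Mi N Ni : 'M[B]_p) : inv2 M Mi -> inv2 N Ni ->
  cong (Dm (M *m N)) (Dm M * Dm N).
Proof.
move=> hM hN; rewrite /Dm Gm_mul.
rewrite (minvP (inv2_mul (Gm_inv hM) (Gm_inv hN))) (minvP (Gm_inv hM)) (minvP (Gm_inv hN)).
have uP := Dm_unip hM; have uQ := Dm_unip hN.
rewrite (minvP (Gm_inv hM)) in uP; rewrite (minvP (Gm_inv hN)) in uQ.
have -> : Gm Ni *m Gm Mi *m (M *m N) = (Gm Ni *m (Gm Mi *m M) *m Gm N) *m (Gm Ni *m N).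
  have [g1 _] := Gm_inv hN.
  by rewrite !mulmxA -(mulmxA _ (Gm N)) g1 mulmx1.
have hh := inv2_sym (Gm_inv hN).
apply: (cong_trans (Mul_all (unip_conj hh uP) uQ)).
apply: (cong_mulr hloc); first exact: Delta_e1.
exact: Delta_conj.
Qed.

Lemma Delta1 p : Delta (1%:M : 'M[B]_p) = 1.
Proof.
elim: p => [|p IH]; first by [].
change (Delta (1%:M : 'M[B]_(1 + p)) = 1).
by rewrite (scalar_mx_block 1 p) DeltaE !mul0mx subr0 IH mulr1.
Qed.

Lemma Dm1 p : Dm (1%:M : 'M[B]_p) = 1.
Proof.
rewrite /Dm (minvP (Gm_inv (@inv2_1 B p))) /Gm !map_scalar_mx (rmorph1 eps) (rmorph1 j).
by rewrite mulmx1 Delta1.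
Qed.

Lemma Dm_comm p (g gi h hi : 'M[B]_p) : inv2 g gi -> inv2 h hi ->
  cong (Dm (g *m h *m gi *m hi)) 1.
Proof.
move=> hg hh; have hgi := inv2_sym hg; have hhi := inv2_sym hh.
have e_g := Dm_e1 hg; have e_h := Dm_e1 hh; have e_gi := Dm_e1 hgi; have e_hi := Dm_e1 hhi.
have i_gh := inv2_mul hg hh; have i_ghg := inv2_mul i_gh hgi.
apply: (cong_trans (Dm_mul i_ghg hhi)).
apply: (cong_trans ((cong_mulr hloc) _ _ _ e_hi (Dm_mul i_gh hgi))).
apply: (cong_trans ((cong_mulr hloc) _ _ _ e_hi ((cong_mulr hloc) _ _ _ e_gi (Dm_mul hg hh)))).
have k1 : cong (Dm g * Dm gi) 1.
  by rewrite -(Dm1 p); have [g1 _] := hg; rewrite -g1; apply: cong_sym; apply: Dm_mul hg hgi.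
have k2 : cong (Dm h * Dm hi) 1.
  by rewrite -(Dm1 p); have [h1 _] := hh; rewrite -h1; apply: cong_sym; apply: Dm_mul hh hhi.
apply: (cong_trans (v := Dm g * Dm gi * Dm h * Dm hi)).
  apply: (cong_mulr hloc) => //; rewrite -!mulrA; apply: cong_mull.
  exact: (cong_comm hloc).
rewrite -mulrA; apply: (cong_trans (v := 1 * (Dm h * Dm hi))).
  by apply: (cong_mulr hloc) => //; apply: e1M.
by rewrite mul1r.
Qed.

Lemma Dm_cp p (X : 'M[B]_p) : commprod X -> cong (Dm X) 1.
Proof.
move=> hX; elim: hX => [|X' g gi h hi h1 h2 h3 h4 cX IH]; first by rewrite Dm1; apply: cong_refl.
have [Xi [_ iX]] := cp_inv cX.
have ic : inv2 (g *m h *m gi *m hi) (h *m g *m hi *m gi).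
  have := inv2_mul (inv2_mul (inv2_mul (conj h1 h2) (conj h3 h4)) (conj h2 h1)) (conj h4 h3).
  by rewrite !mulmxA.
apply: (cong_trans (Dm_mul iX ic)).
apply: (cong_trans ((cong_mulr hloc) _ _ _ (Dm_e1 ic) IH)).
by rewrite mul1r; apply: Dm_comm.
Qed.
End DmSec.
Section BM3.
Variable R : pzRingType.
Variables n1 n2 n3 : nat.

Definition bm3 (a11 : 'M[R]_(n1, n1)) (a12 : 'M[R]_(n1, n2)) (a13 : 'M[R]_(n1, n3))
  (a21 : 'M[R]_(n2, n1)) (a22 : 'M[R]_(n2, n2)) (a23 : 'M[R]_(n2, n3))
  (a31 : 'M[R]_(n3, n1)) (a32 : 'M[R]_(n3, n2)) (a33 : 'M[R]_(n3, n3)) : 'M[R]_(n1 + n2 + n3) :=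
  block_mx (block_mx a11 a12 a21 a22) (col_mx a13 a23) (row_mx a31 a32) a33.

Lemma bm3_mul a11 a12 a13 a21 a22 a23 a31 a32 a33 b11 b12 b13 b21 b22 b23 b31 b32 b33 :
  bm3 a11 a12 a13 a21 a22 a23 a31 a32 a33 *m bm3 b11 b12 b13 b21 b22 b23 b31 b32 b33 =
  bm3 (a11 *m b11 + a12 *m b21 + a13 *m b31) (a11 *m b12 + a12 *m b22 + a13 *m b32)
      (a11 *m b13 + a12 *m b23 + a13 *m b33)
      (a21 *m b11 + a22 *m b21 + a23 *m b31) (a21 *m b12 + a22 *m b22 + a23 *m b32)
      (a21 *m b13 + a22 *m b23 + a23 *m b33)
      (a31 *m b11 + a32 *m b21 + a33 *m b31) (a31 *m b12 + a32 *m b22 + a33 *m b32)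
      (a31 *m b13 + a32 *m b23 + a33 *m b33).
Proof.
rewrite /bm3 mulmx_block mulmx_block mul_col_row mul_block_col mul_row_block mul_row_col mul_mx_row mul_col_mx.
by rewrite !add_block_mx add_col_mx add_row_mx.
Qed.

Lemma bm3_one : bm3 1%:M 0 0 0 1%:M 0 0 0 1%:M = 1%:M.
Proof. by rewrite /bm3 -!scalar_mx_block col_mx0 row_mx0 -scalar_mx_block. Qed.
End BM3.
Section Elem.
Variable R : pzRingType.
Variables n1 n2 : nat.

Local Notation bm := (@bm3 R n1 n2 n1).

Ltac simpm := rewrite ?bm3_mul; rewrite ?(mul1mx, mulmx1, mul0mx, mulmx0, mulNmx, mulmxN, oppr0, opprK, addr0, add0r, subr0, subrr, addNr, addrN).

Lemma cpE21 (z : 'M[R]_(n2, n1)) : commprod (bm 1%:M 0 0 z 1%:M 0 0 0 1%:M).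
Proof.
have -> : bm 1%:M 0 0 z 1%:M 0 0 0 1%:M =
  bm 1%:M 0 0 0 1%:M z 0 0 1%:M *m bm 1%:M 0 0 0 1%:M 0 1%:M 0 1%:M *m
  bm 1%:M 0 0 0 1%:M (- z) 0 0 1%:M *m bm 1%:M 0 0 0 1%:M 0 (- 1%:M) 0 1%:M.
  by simpm; simpm; simpm.
apply: cp_comm; split; simpm; by rewrite bm3_one.
Qed.

Lemma cpE12 (y : 'M[R]_(n1, n2)) : commprod (bm 1%:M y 0 0 1%:M 0 0 0 1%:M).
Proof.
have -> : bm 1%:M y 0 0 1%:M 0 0 0 1%:M =
  bm 1%:M 0 1%:M 0 1%:M 0 0 0 1%:M *m bm 1%:M 0 0 0 1%:M 0 0 y 1%:M *m
  bm 1%:M 0 (- 1%:M) 0 1%:M 0 0 0 1%:M *m bm 1%:M 0 0 0 1%:M 0 0 (- y) 1%:M.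
  by simpm; simpm; simpm.
apply: cp_comm; split; simpm; by rewrite bm3_one.
Qed.
End Elem.
Section Triv.
Variable R : pzRingType.

Lemma K1eq_11 n m : K1eq (1%:M : 'M[R]_n) (1%:M : 'M[R]_m).
Proof.
apply: (K1eq_intro (p := n + m)); rewrite ?leq_addr ?leq_addl //.
rewrite !stab_one ?leq_addr ?leq_addl //; exact: EqP_refl.
Qed.

Lemma LE_triv n k (z : 'M[R]_(k, n)) :
  K1eq (block_mx 1%:M 0 z 1%:M : 'M[R]_(n + k)) (1%:M : 'M[R]_(n + k)).
Proof.
apply: (K1eq_intro (p := n + k + n)); rewrite ?leq_addr //.
rewrite stab_one ?leq_addr // stab_block; exists (bm3 1%:M 0 0 z 1%:M 0 0 0 1%:M); split.
  exact: cpE21.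
by rewrite mulmx1 /bm3 col_mx0 row_mx0.
Qed.

Lemma UE_triv n k (y : 'M[R]_(n, k)) :
  K1eq (block_mx 1%:M y 0 1%:M : 'M[R]_(n + k)) (1%:M : 'M[R]_(n + k)).
Proof.
apply: (K1eq_intro (p := n + k + n)); rewrite ?leq_addr //.
rewrite stab_one ?leq_addr // stab_block; exists (bm3 1%:M y 0 0 1%:M 0 0 0 1%:M); split.
  exact: cpE12.
by rewrite mulmx1 /bm3 col_mx0 row_mx0.
Qed.

Lemma K1eq_diag1 k k' (S : 'M[R]_k) (S' : 'M[R]_k') : K1eq S S' ->
  K1eq (block_mx (1%:M : 'M[R]_1) 0 0 S : 'M_(1 + k)) (block_mx (1%:M : 'M[R]_1) 0 0 S' : 'M_(1 + k')).
Proof.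
move=> h; have [p [_ h1 h2 [X [cX e]]]] := K1eq_big 0 h.
apply: (K1eq_intro (p := 1 + p)); rewrite ?leq_add2l //.
rewrite !stab_diag // e; exists (block_mx 1%:M 0 0 X); split; first exact: cp_diag1.
by rewrite mulmx_block !mulmx0 !mul0mx !addr0 !add0r mulmx1.
Qed.

Definition m22 (a b c d : R) : 'M[R]_(1 + 1) := block_mx a%:M b%:M c%:M d%:M.

Lemma m22_mul a b c d a' b' c' d' : m22 a b c d *m m22 a' b' c' d' =
  m22 (a * a' + b * c') (a * b' + b * d') (c * a' + d * c') (c * b' + d * d').
Proof. by rewrite /m22 mulmx_block -!scalar_mxM -!scalar_mxD. Qed.

Lemma m22_one : m22 1 0 0 1 = 1%:M.
Proof. by rewrite /m22 scal0 -scalar_mx_block. Qed.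

Lemma m22_L z : K1eq (m22 1 0 z 1) (1%:M : 'M[R]_(1 + 1)).
Proof. by rewrite /m22 scal0; apply: LE_triv. Qed.

Lemma m22_U y : K1eq (m22 1 y 0 1) (1%:M : 'M[R]_(1 + 1)).
Proof. by rewrite /m22 scal0; apply: UE_triv. Qed.

Lemma W_triv (a b w : R) : (1 + b * a) * w = 1 -> w * (1 + b * a) = 1 ->
  K1eq (m22 (1 + a * b) 0 0 w) (1%:M : 'M[R]_(1 + 1)).
Proof.
move=> h1 h2; have [k1 k2] := inv1ab h1 h2.
set v := 1 - a * w * b in k1 k2; clearbody v.
have [l1 l2] := inv1ab k1 k2.
have wE : 1 - b * v * a = w by apply: (inv_uniq l1 h2).
have -> : m22 (1 + a * b) 0 0 w =
   m22 1 0 (- (b * v)) 1 *m m22 1 a 0 1 *m m22 1 0 b 1 *m m22 1 (- (v * a)) 0 1.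
  have e : b * v + b * v * a * b = b.
    by rewrite -[RHS]mulr1 -k2 mulrDr mulr1 mulrDr !mulrA.
  have e2 : - (b * v) + (- (b * v) * a + 1) * b = 0.
    by rewrite mulrDl mul1r !mulNr addrA -opprD e addNr.
  rewrite !m22_mul !(mul1r, mulr1, mul0r, mulr0, addr0, add0r).
  congr m22.
  - by rewrite mulrN mulrA k1 mul1r addNr.
  - by rewrite e2.
  - by rewrite e2 mul0r add0r mulNr addrC wE.
apply: (K1eq_trans (N := 1%:M *m 1%:M *m 1%:M *m (1%:M : 'M[R]_(1 + 1)))); last by rewrite !mulmx1; apply: K1eq_refl.
apply: (K1eq_mul (Mi' := 1%:M)); [by rewrite !mulmx1; exact: inv2_1 | | exact: m22_U].
apply: (K1eq_mul (Mi' := 1%:M)); [by rewrite !mulmx1; exact: inv2_1 | | exact: m22_L].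
apply: (K1eq_mul (Mi' := 1%:M)); [exact: inv2_1 | exact: m22_L | exact: m22_U].
Qed.

End Triv.
Section Triv2.
Variable R : pzRingType.

Lemma K1_scal (u : R) : K1eq (u%:M : 'M[R]_1) (m22 u 0 0 1).
Proof.
apply: K1eq_sym; have -> : m22 u 0 0 1 = stab (1 + 1) (u%:M : 'M[R]_1).
  by rewrite stab_block /m22 scal0.
exact: K1eq_stab.
Qed.

Lemma m22_inv (a ai d di : R) : a * ai = 1 -> ai * a = 1 -> d * di = 1 -> di * d = 1 ->
  inv2 (m22 a 0 0 d) (m22 ai 0 0 di).
Proof.
move=> h1 h2 h3 h4; split; rewrite m22_mul !(mulr0, mul0r, addr0, add0r) ?h1 ?h2 ?h3 ?h4;
  exact: m22_one.
Qed.

Lemma gen_triv (a b w : R) : (1 + b * a) * w = 1 -> w * (1 + b * a) = 1 ->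
  K1eq (((1 + a * b) * w)%:M : 'M[R]_1) (1%:M : 'M[R]_1).
Proof.
move=> h3 h4.
apply: (K1eq_trans (K1_scal _)).
have -> : m22 ((1 + a * b) * w) 0 0 1 = m22 (1 + a * b) 0 0 w *m m22 w 0 0 (1 + b * a).
  by rewrite m22_mul !(mulr0, mul0r, addr0, add0r) h4.
apply: (K1eq_trans (N := 1%:M *m (1%:M : 'M[R]_(1 + 1)))).
  apply: (K1eq_mul (Mi' := 1%:M)); first exact: inv2_1.
    exact: W_triv.
  have := @W_triv R (w - 1) 1 (1 + b * a).
  rewrite mulr1 mul1r addrC subrK; apply; first exact: h4.
  exact: h3.
rewrite mulmx1 -m22_one; apply: K1eq_sym; exact: K1_scal.
Qed.

Lemma W_diag (v vi : R) : v * vi = 1 -> vi * v = 1 -> K1eq (m22 vi 0 0 v) (1%:M : 'M[R]_(1 + 1)).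
Proof.
move=> h1 h2; have := @W_triv R (vi - 1) 1 v.
by rewrite mulr1 mul1r addrC subrK; apply.
Qed.
End Triv2.

Section CTriv.
Variables (A B : pzRingType) (eps : {rmorphism B -> A}).

Lemma C_triv c : inC eps c -> K1eq (c%:M : 'M[B]_1) (1%:M : 'M[B]_1).
Proof.
elim=> [|x a b w h1 h2 h3 h4 _ IH|x a b w y h1 h2 h3 h4 h5 h6 _ IH].
- exact: K1eq_refl.
- rewrite scalar_mxM; rewrite -[X in K1eq _ X]mulmx1.
  apply: (K1eq_mul (Mi' := 1%:M)); [exact: inv2_1 | exact: IH | exact: gen_triv].
- rewrite scalar_mxM; rewrite -[X in K1eq _ X]mulmx1.
  apply: (K1eq_mul (Mi' := 1%:M)); [exact: inv2_1 | exact: IH | idtac].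
  have g := gen_triv h3 h4.
  have := K1eq_mul (@inv2_1 B 1) g (K1eq_refl (y%:M : 'M[B]_1)).
  by rewrite -scalar_mxM h5 mul1mx => /K1eq_sym.
Qed.
End CTriv.
Section Surj.
Variables (A B : pzRingType) (eps : {rmorphism B -> A}).
Variable hloc : local_hom eps.

Local Notation cong := (cong eps).
Local Notation e1 := (e1 eps).
Local Notation unip := (unip eps).

Lemma surj_core p (P : 'M[B]_p) : unip P -> K1eq P ((Delta P)%:M : 'M[B]_1).
Proof.
elim: p P => [|p IH] P.
  move=> _; rewrite Delta0; apply: (K1eq_intro (p := 1)) => //.
  rewrite (flatmx0 P) -(flatmx0 1%:M) !stab_one //; exact: EqP_refl.
change 'M[B]_(1 + p) in P; change (unip (P : 'M_(1 + p)) -> K1eq (P : 'M_(1 + p)) ((Delta (P : 'M_(1 + p)))%:M : 'M[B]_1)).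
rewrite [P]block_split; move: (P 0 0) (ursubmx P) (dlsubmx P) (drsubmx P) => a r c D uT.
have uS := unip_schur (binv a) uT; case/unip_block: (uT) => ea er ec uD.
rewrite DeltaE.
set ai := binv a; set S := D - c *m ai%:M *m r.
have [j1 j2] := unit_e1 hloc ea.
have ar : a%:M *m (ai%:M *m r) = r by rewrite mulmxA -scalar_mxM j1 mul1mx.
have fact : block_mx a%:M r c D = block_mx 1%:M 0 (c *m ai%:M) 1%:M *m
    ((block_mx a%:M 0 0 1%:M *m block_mx 1%:M 0 0 S) *m block_mx 1%:M (ai%:M *m r) 0 1%:M).
  rewrite !mulmx_block !mul1mx !mul0mx !mulmx0 !mulmx1 ?addr0 ?add0r ar.
  by rewrite -mulmxA -scalar_mxM j2 mulmx1 mul0mx add0r /S addrC subrK.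
set v := Delta S.
have ev : e1 v by apply: Delta_e1.
have [v1 v2] := unit_e1 hloc ev.
have eav : e1 (a * v) by apply: e1M.
have [w1 w2] := unit_e1 hloc eav.
rewrite fact.
apply: (K1eq_trans (N := 1%:M *m ((m22 a 0 0 1 *m m22 1 0 0 v) *m 1%:M))).
  apply: (K1eq_mul (Mi' := 1%:M)); first exact: inv2_1.
    apply: K1eq_trans; [exact: LE_triv | exact: K1eq_11].
  apply: (K1eq_mul (Mi' := m22 1 0 0 (binv v) *m m22 ai 0 0 1)); last by apply: K1eq_trans; [exact: UE_triv | exact: K1eq_11].
    by apply: inv2_mul; apply: m22_inv; rewrite ?mulr1.
  apply: (K1eq_mul (Mi' := m22 ai 0 0 1)).
  - by apply: m22_inv; rewrite ?mulr1.
  - have -> : block_mx a%:M 0 0 1%:M = stab (1 + p) (a%:M : 'M[B]_1) by rewrite stab_block.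
    apply: K1eq_trans (K1eq_stab _ _) (K1_scal _); exact: leq_addr.
  - have -> : m22 1 0 0 v = block_mx 1%:M 0 0 v%:M by rewrite /m22 scal0.
    by apply: K1eq_diag1; apply: IH.
rewrite mul1mx mulmx1 m22_mul !(mulr0, mul0r, addr0, add0r, mulr1, mul1r).
have -> : m22 a 0 0 v = m22 (a * v) 0 0 1 *m m22 (binv v) 0 0 v.
  by rewrite m22_mul !(mulr0, mul0r, addr0, add0r, mulr1, mul1r) -mulrA v1 mulr1.
apply: (K1eq_trans (N := m22 (a * v) 0 0 1 *m 1%:M)).
  apply: (K1eq_mul (Mi' := m22 (binv (a * v)) 0 0 1)).
  - by apply: m22_inv; rewrite ?mulr1.
  - exact: K1eq_refl.
  - exact: W_diag.
by rewrite mulmx1; apply: K1eq_sym; apply: K1_scal.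
Qed.
End Surj.
Section Final.
Variables (A B : pzRingType) (eps : {rmorphism B -> A}) (j : {rmorphism A -> B}).
Variable hsec : forall a : A, eps (j a) = a.
Variable hloc : local_hom eps.

Local Notation cong := (cong eps).
Local Notation e1 := (e1 eps).
Local Notation unip := (unip eps).

Lemma eps_j_mx m n (M : 'M[A]_(m, n)) : map_mx eps (map_mx j M) = M.
Proof. by apply/matrixP=> i k; rewrite !mxE hsec. Qed.

Lemma Delta_stab_u p (u : B) : (1 <= p)%N -> Delta (stab p (u%:M : 'M[B]_1)) = u.
Proof.
move=> /leq_addE [k ->]; rewrite stab_block DeltaE !mul0mx subr0 Delta1 mulr1 //.
Qed.

Lemma Dm_j p (M Mi : 'M[B]_p) : inv2 M Mi -> Gm eps j M = M -> Dm eps j M = 1.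
Proof.
move=> h e; rewrite /Dm e (minvP h); case: h => _ ->; exact: Delta1.
Qed.

Lemma Dm_u p (u : B) : e1 u -> (1 <= p)%N -> Dm eps j (stab p (u%:M : 'M[B]_1)) = u.
Proof.
move=> eu hp; rewrite /Dm.
have -> : Gm eps j (stab p (u%:M : 'M[B]_1)) = 1%:M.
  by rewrite /Gm !map_stab !map_scalar_mx eu (rmorph1 j) stab_one.
by rewrite (minvP (@inv2_1 B p)) mul1mx Delta_stab_u.
Qed.

Lemma inv2_scal (u : B) : e1 u -> inv2 (u%:M : 'M[B]_1) (binv u)%:M.
Proof.
move=> eu; have [h1 h2] := unit_e1 hloc eu.
by split; rewrite -scalar_mxM ?h1 ?h2.
Qed.

Lemma inv2_Phi n (x : 'M[A]_n) (u : B) : invertible_mx x -> e1 u ->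
  exists Ni, inv2 (Phi j x u) Ni.
Proof.
move=> [xi hx] eu; rewrite /Phi.
eexists; apply: inv2_mul; apply: inv2_stab => //.
- exact: inv2_map hx.
- exact: inv2_scal.
Qed.

Lemma Dm_Phi p n (x : 'M[A]_n) (u : B) : invertible_mx x -> e1 u -> (n.+1 <= p)%N ->
  cong (Dm eps j (stab p (Phi j x u))) u.
Proof.
move=> [xi hx] eu hp.
have hn : (n <= p)%N by apply: ltnW.
have h1p : (1 <= p)%N by apply: leq_trans (ltn0Sn n) hp.
rewrite /Phi stab_mul // (stab_stab _ (leqnSn n) hp) (stab_stab _ (ltn0Sn n) hp).
have i1 : inv2 (stab p (map_mx j x)) (stab p (map_mx j xi)).
  by apply: inv2_stab => //; exact: inv2_map.
have i2 := inv2_stab h1p (inv2_scal eu).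
apply: (cong_trans (Dm_mul hsec hloc i1 i2)).
rewrite (Dm_j i1) ?Dm_u ?mul1r //; first exact: cong_refl.
by rewrite /Gm map_stab eps_j_mx map_stab.
Qed.
End Final.
Unset Implicit Arguments.

Theorem mainTheorem2 (A B : pzRingType)
  (eps : {rmorphism B -> A}) (j : {rmorphism A -> B})
  (hsec : forall a : A, eps (j a) = a)
  (hloc : local_hom eps) :
  (* C is a normal subgroup of eps^{-1}(1) *)
  ((forall c : B, inC eps c -> eps c = 1) /\
   (forall u ui c : B, eps u = 1 -> u * ui = 1 -> ui * u = 1 ->
      inC eps c -> inC eps (u * c * ui))) /\
  (* the map (x, uC) |-> j_*[x] [(u)] is well defined ... *)
  (forall (n m : nat) (x : 'M[A]_n) (x' : 'M[A]_m) (u u' : B),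
      invertible_mx x -> invertible_mx x' -> eps u = 1 -> eps u' = 1 ->
      K1eq x x' -> (exists c, inC eps c /\ u' = u * c) ->
      K1eq (Phi j x u) (Phi j x' u')) /\
  (* ... a group homomorphism ... *)
  (forall (n : nat) (x x' : 'M[A]_n) (u u' : B),
      invertible_mx x -> invertible_mx x' -> eps u = 1 -> eps u' = 1 ->
      K1eq (Phi j (x *m x') (u * u')) (Phi j x u *m Phi j x' u')) /\
  (* ... injective ... *)
  (forall (n m : nat) (x : 'M[A]_n) (x' : 'M[A]_m) (u u' : B),
      invertible_mx x -> invertible_mx x' -> eps u = 1 -> eps u' = 1 ->
      K1eq (Phi j x u) (Phi j x' u') ->
      K1eq x x' /\ (exists c, inC eps c /\ u' = u * c)) /\
  (* ... and surjective onto K_1(B). *)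
  (forall (m : nat) (y : 'M[B]_m), invertible_mx y ->
      exists (n : nat) (x : 'M[A]_n) (u : B),
        [/\ invertible_mx x, eps u = 1 & K1eq y (Phi j x u)]).
Proof.
split; [split|split; [|split; [|split]]].
- by move=> c hc; apply: inC_e1.
- by move=> u ui c eu h1 h2 hc; apply: inC_normal.
-
  move=> n m x x' u u' [xi hx] [xi' hx'] eu eu' hK [c [hc ->]].
  rewrite /Phi.
  have i' : inv2 (stab m.+1 (map_mx j x')) (stab m.+1 (map_mx j xi')).
    by apply: inv2_stab => //; exact: inv2_map.
  apply: (K1eq_mul i').
    apply: K1eq_trans (K1eq_stab _ (leqnSn n)) _.
    apply: K1eq_trans (K1eq_map j hK) _.
    apply: K1eq_sym; exact: K1eq_stab.
  apply: K1eq_trans (K1eq_stab _ (ltn0Sn n)) _.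
  apply: K1eq_sym; apply: K1eq_trans (K1eq_stab _ (ltn0Sn m)) _.
  rewrite scalar_mxM -[X in K1eq _ X]mulmx1.
  apply: (K1eq_mul (inv2_scal hloc eu)); first exact: K1eq_refl.
  exact: C_triv hc.
-
  move=> n x x' u u' [xi hx] [xi' hx'] eu eu'.
  apply: K1eq_EqP; rewrite /Phi map_mxM scalar_mxM !stab_mul //.
  set J := stab n.+1 (map_mx j x); set J' := stab n.+1 (map_mx j x').
  set U := stab n.+1 (u%:M : 'M[B]_1); set U' := stab n.+1 (u'%:M : 'M[B]_1).
  have [Ji iJ] : exists Ji, inv2 J Ji.
    by eexists; apply: inv2_stab => //; exact: inv2_map hx.
  have [J'i iJ'] : exists Ji, inv2 J' Ji.
    by eexists; apply: inv2_stab => //; exact: inv2_map hx'.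
  have [Ui iU] : exists Ui, inv2 U Ui.
    by eexists; apply: inv2_stab => //; exact: (inv2_scal hloc eu).
  have -> : J *m J' *m (U *m U') = (J *m (J' *m U *m J'i *m Ui) *m Ji) *m (J *m U *m (J' *m U')).
    case: iJ => _ k2; case: iJ' => _ k4; case: iU => _ k6.
    rewrite !mulmxA -(mulmxA _ Ji J) k2 mulmx1 -(mulmxA _ Ui U) k6 mulmx1.
    by rewrite -(mulmxA _ J'i J') k4 mulmx1.
  apply: EqP_cp; apply: cp_conj iJ; exact: cp_comm.
-
  move=> n m x x' u u' ix ix' eu eu' hK; split.
    have := K1eq_map eps hK.
    rewrite /Phi !map_mxM !map_stab !eps_j_mx // !map_scalar_mx eu eu' !stab_one // !mulmx1.
    move=> h; apply: K1eq_trans (K1eq_sym (K1eq_stab _ (leqnSn n))) _.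
    by apply: K1eq_trans h _; exact: K1eq_stab.
  have [p [hp h1 h2 [X [cX e]]]] := K1eq_big (n.+1) hK.
  have [Ni iN] := inv2_Phi j hloc ix' eu'.
  have iN' := inv2_stab h2 iN.
  have [Xi [_ iX]] := cp_inv cX.
  have k1 := Dm_Phi hsec hloc ix eu h1.
  have k2 := Dm_Phi hsec hloc ix' eu' h2.
  have k3 := Dm_cp hsec hloc cX.
  have k4 := Dm_mul hsec hloc iX iN'.
  rewrite -e in k4.
  have := cong_trans (cong_sym k1) k4.
  move=> k5; apply: (cong_trans k5).
  apply: (cong_trans ((cong_mulr hloc) _ _ _ (Dm_e1 hsec iN') k3)).
  by rewrite mul1r.
-
  move=> m y [yi hy].
  set x := map_mx eps y.
  have ix : invertible_mx x by exists (map_mx eps yi); exact: inv2_map hy.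
  set P := minv (Gm eps j y) *m y.
  have uP : unip eps P by apply: (Dm_unip hsec hy).
  exists m, x, (Delta P); split => //.
    exact: Delta_e1.
  have yE : y = Gm eps j y *m P.
    rewrite /P (minvP (Gm_inv eps j hy)) mulmxA.
    by case: (Gm_inv eps j hy) => -> _; rewrite mul1mx.
  rewrite {1}yE /Phi.
  have i' : inv2 (stab m.+1 (map_mx j x)) (stab m.+1 (map_mx j (map_mx eps yi))).
    by apply: inv2_stab => //; apply: inv2_map; exact: inv2_map hy.
  apply: (K1eq_mul i').
    apply: K1eq_sym; exact: K1eq_stab.
  apply: K1eq_trans (surj_core hloc uP) _.
  apply: K1eq_sym; exact: K1eq_stab.
Qed.
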